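(* Let $n\ge2$ and let $u$ be a polar $n$-complex number. Then, with $\exp w=\sum_{j\ge0}w^j/j!$, for even $n$ $$e^u=e_+e^{v_+}+e_-e^{v_-}+\sum_{k=1}^{n/2-1}e^{v_k}\big(e_k\cos\tilde v_k+\tilde e_k\sin\tilde v_k\big),$$ and for odd $n$ $$e^u=e_+e^{v_+}+\sum_{k=1}^{(n-1)/2}e^{v_k}\big(e_k\cos\tilde v_k+\tilde e_k\sin\tilde v_k\big).$$
   Context: Polar $n$-complex numbers: $u=x_0+h_1x_1+\cdots+h_{n-1}x_{n-1}$, $x_j\in\mathbb{R}$, $h_0=1$, componentwise addition, bilinear multiplication $h_jh_k=h_{(j+k)\bmod n}$. Canonical variables: $v_+=\sum_px_p$; for even $n$, $v_-=\sum_p(-1)^px_p$; $v_k=\sum_px_p\cos(2\pi kp/n)$, $\tilde v_k=\sum_px_p\sin(2\pi kp/n)$ for $k=1,\dots,\lfloor(n-1)/2\rfloor$. Canonical base: $e_+=\frac1n\sum_ph_p$, $e_-=\frac1n\sum_p(-1)^ph_p$ (even $n$), $e_k=\frac2n\sum_p\cos(2\pi kp/n)h_p$, $\tilde e_k=\frac2n\sum_p\sin(2\pi kp/n)h_p$. *)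

(* Defs.v *)
From HB Require Import structures.
From mathcomp Require Import all_boot all_order all_algebra.
From mathcomp Require Import all_classical all_reals all_analysis.
Set Implicit Arguments. Unset Strict Implicit. Unset Printing Implicit Defensive.
Import Order.TTheory GRing.Theory Num.Theory.
Local Open Scope ring_scope.

Section PolarNComplex.
Variables (R : realType) (n : nat).

(* A polar n-complex number u = x_0 + h_1 x_1 + ... + h_{n-1} x_{n-1} is
   represented by its coordinate row vector (x_0, ..., x_{n-1}). *)
Notation pcomplex := 'rV[R]_n.

Definition pc_h (p : nat) : pcomplex := \row_(m < n) ((m : nat) == (p %% n)%N)%:R.

(* bilinear multiplication with h_j h_k = h_{(j+k) mod n} *)
Definition pcmul (x y : pcomplex) : pcomplex :=
  \row_(m < n) \sum_(j < n) \sum_(k < n | ((j + k) %% n)%N == m) x 0 j * y 0 k.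

Definition pcone : pcomplex := pc_h 0.

Definition pcpow (u : pcomplex) (j : nat) : pcomplex := iter j (pcmul u) pcone.

Definition v_plus (u : pcomplex) : R := \sum_(p < n) u 0 p.
Definition v_minus (u : pcomplex) : R := \sum_(p < n) (-1) ^+ p * u 0 p.
Definition v_k (k : nat) (u : pcomplex) : R :=
  \sum_(p < n) u 0 p * cos (2 * pi * k%:R * p%:R / n%:R).
Definition vt_k (k : nat) (u : pcomplex) : R :=
  \sum_(p < n) u 0 p * sin (2 * pi * k%:R * p%:R / n%:R).

Definition e_plus : pcomplex := n%:R^-1 *: \sum_(p < n) pc_h p.
Definition e_minus : pcomplex := n%:R^-1 *: \sum_(p < n) (-1) ^+ p *: pc_h p.
Definition e_k (k : nat) : pcomplex :=
  (2 / n%:R) *: \sum_(p < n) cos (2 * pi * k%:R * p%:R / n%:R) *: pc_h p.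
Definition et_k (k : nat) : pcomplex :=
  (2 / n%:R) *: \sum_(p < n) sin (2 * pi * k%:R * p%:R / n%:R) *: pc_h p.

Definition pcexp_partial (u : pcomplex) (N : nat) : pcomplex :=
  \sum_(j < N) (j`!%:R)^-1 *: pcpow u j.

End PolarNComplex.

(* Main.v *)
Require Import Defs.
From HB Require Import structures.
From mathcomp Require Import all_boot all_order all_algebra.
From mathcomp Require Import all_classical all_reals all_analysis.
From mathcomp Require Import ring lra zify.
From mathcomp Require Import complex.
Import Order.TTheory GRing.Theory Num.Theory.
Import numFieldNormedType.Exports.
Local Open Scope classical_set_scope.
Local Open Scope ring_scope.


Section Cauchy.
Variable K : numFieldType.

Definition cf (j : nat) : K := (j`!%:R)^-1.
Definition Sp (N : nat) (z : K) : K := \sum_(0 <= j < N) cf j * z ^+ j.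

Lemma fact_neq0 m : (m`!%:R : K) != 0.
Proof. by rewrite pnatr_eq0 -lt0n fact_gt0. Qed.

Lemma cf_bin m i : (i <= m)%N -> cf m * ('C(m, i))%:R = cf (m - i) * cf i.
Proof.
move=> im; rewrite /cf.
have h : ('C(m, i)%:R : K) = m`!%:R / (i`!%:R * (m - i)%N`!%:R).
  by rewrite -(bin_fact im) !natrM mulfK // mulf_neq0 // fact_neq0.
rewrite h mulrA mulVf ?fact_neq0 // mul1r invfM; exact: mulrC.
Qed.

Lemma tri (F : nat -> nat -> K) N :
  \sum_(0 <= m < N) \sum_(0 <= i < m.+1) F (m - i)%N i =
  \sum_(0 <= j < N) \sum_(0 <= l < N - j) F j l.
Proof.
elim: N => [|N IH]; first by rewrite !big_geq.
rewrite big_nat_recr //= IH.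
have -> : \sum_(0 <= j < N.+1) \sum_(0 <= l < N.+1 - j) F j l =
   \sum_(0 <= j < N.+1) (\sum_(0 <= l < N - j) F j l + F j (N - j)%N).
  apply: eq_big_nat => j /andP[_ jN].
  by rewrite (subSn (jN : (j <= N)%N)) big_nat_recr.
rewrite big_split /=.
have -> : \sum_(0 <= j < N.+1) \sum_(0 <= l < N - j) F j l =
          \sum_(0 <= j < N) \sum_(0 <= l < N - j) F j l.
  by rewrite big_nat_recr //= subnn [X in _ + X]big_geq // addr0.
congr (_ + _).
rewrite big_nat_rev /=; apply: eq_big_nat => i /andP[_ iN].
by rewrite add0n subSS (subKn (iN : (i <= N)%N)).
Qed.

Lemma SpD N x y : Sp N (x + y) =
  \sum_(0 <= j < N) \sum_(0 <= l < N - j) cf j * cf l * (x ^+ j * y ^+ l).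
Proof.
rewrite /Sp -tri; apply: eq_big_nat => m _.
rewrite exprDn big_mkord mulr_sumr; apply: eq_bigr => i _.
have im : (i <= m)%N by rewrite -ltnS.
rewrite -mulr_natr -(@cf_bin m i im); ring.
Qed.

Lemma Sp_cauchy N x y : Sp N x * Sp N y - Sp N (x + y) =
  \sum_(0 <= j < N) \sum_(N - j <= l < N) cf j * cf l * (x ^+ j * y ^+ l).
Proof.
rewrite SpD /Sp mulr_suml.
have -> : \sum_(0 <= i < N) cf i * x ^+ i * (\sum_(0 <= j < N) cf j * y ^+ j) =
   \sum_(0 <= j < N) (\sum_(0 <= l < N - j) cf j * cf l * (x ^+ j * y ^+ l)
      + \sum_(N - j <= l < N) cf j * cf l * (x ^+ j * y ^+ l)).
  apply: eq_big_nat => j _; rewrite -big_cat_nat ?leq_subr //.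
  rewrite mulr_sumr; apply: eq_big_nat => l _.
  ring.
by rewrite big_split /= addrAC subrr add0r.
Qed.

End Cauchy.
Arguments cf {K} j.
Arguments Sp {K} N z.
Arguments Sp_cauchy {K} N x y.
Arguments fact_neq0 {K} m.


Section Cx.
Variable R : realType.
Local Notation C := R[i].
Local Notation cRe := (@complex.Re R).
Local Notation cIm := (@complex.Im R).
Local Notation rC := (real_complex R).

Lemma cReD (x y : C) : cRe (x + y) = cRe x + cRe y.
Proof. destruct x as [a b]; destruct y as [c d]; reflexivity. Qed.
Lemma cImD (x y : C) : cIm (x + y) = cIm x + cIm y.
Proof. destruct x as [a b]; destruct y as [c d]; reflexivity. Qed.
Lemma cRe_sum I (r : seq I) (P : pred I) (F : I -> C) :
  cRe (\sum_(i <- r | P i) F i) = \sum_(i <- r | P i) cRe (F i).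
Proof. exact: (big_morph _ cReD). Qed.
Lemma cIm_sum I (r : seq I) (P : pred I) (F : I -> C) :
  cIm (\sum_(i <- r | P i) F i) = \sum_(i <- r | P i) cIm (F i).
Proof. exact: (big_morph _ cImD). Qed.
Lemma cReM (x y : C) : cRe (x * y) = cRe x * cRe y - cIm x * cIm y.
Proof. destruct x as [a b]; destruct y as [c d]; reflexivity. Qed.
Lemma cImM (x y : C) : cIm (x * y) = cRe x * cIm y + cIm x * cRe y.
Proof. destruct x as [a b]; destruct y as [c d]; reflexivity. Qed.
Lemma cRe_rM (r : R) (w : C) : cRe (rC r * w) = r * cRe w.
Proof. rewrite cReM /=. rewrite mul0r subr0. reflexivity. Qed.
Lemma cIm_rM (r : R) (w : C) : cIm (rC r * w) = r * cIm w.
Proof. rewrite cImM /=. rewrite mul0r addr0. reflexivity. Qed.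

Lemma Sp_rC N (a : R) : Sp N (rC a) = rC (Sp N a).
Proof.
rewrite /Sp rmorph_sum; apply: eq_bigr => j _.
by rewrite rmorphM rmorphXn /cf fmorphV rmorph_nat.
Qed.

Lemma ib_pow (b : R) j :
  cRe ((Complex 0 b : C) ^+ j) = (~~ odd j)%:R * (-1) ^+ j./2 * b ^+ j /\
  cIm ((Complex 0 b : C) ^+ j) = (odd j)%:R * (-1) ^+ j.-1./2 * b ^+ j.
Proof.
elim: j => [|j [IHr IHi]].
  split; rewrite expr0 /=; [by rewrite !mul1r | by rewrite !mul0r].
rewrite exprSr cReM cImM IHr IHi /=.
case oj: (odd j) => /=.
- have hj : j = j.-1.+1 by rewrite prednK // lt0n; apply: contraTneq oj => ->.
  have e1 : uphalf j = (j.-1./2).+1 by rewrite hj.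
  have e2 : j./2 = j.-1./2.
    rewrite hj /= uphalf_half.
    have : odd j.-1 = false by move: oj; rewrite {1}hj /= => /negbTE.
    by move=> ->.
  rewrite e1 e2 exprS exprSr; split; ring.
- rewrite uphalf_half oj add0n exprSr; split; ring.
Qed.

Lemma cos_cvg (b : R) : series (cos_coeff b) @ \oo --> cos b.
Proof. rewrite cos.unlock. exact: is_cvg_series_cos_coeff. Qed.
Lemma sin_cvg (b : R) : series (sin_coeff b) @ \oo --> sin b.
Proof. rewrite sin.unlock. exact: is_cvg_series_sin_coeff. Qed.
Lemma Sp_exp_cvg (x : R) : (fun N => Sp N x) @ \oo --> expR x.
Proof.
have -> : (fun N => Sp N x) = series (exp_coeff x).
  apply/funext => N; rewrite /series /= /Sp; apply: eq_bigr => k _.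
  by rewrite /exp_coeff /= mulrC.
exact: is_cvg_series_exp_coeff.
Qed.

Lemma cfC j : (cf j : C) = rC (cf j).
Proof. by rewrite /cf fmorphV rmorph_nat. Qed.

Lemma Sp_ib_Re N (b : R) : cRe (Sp N (Complex 0 b : C)) = series (cos_coeff b) N.
Proof.
rewrite /Sp cRe_sum /series /=; apply: eq_bigr => j _.
rewrite cfC cRe_rM (ib_pow b j).1 /cf /cos_coeff /=; exact: mulrC.
Qed.
Lemma Sp_ib_Im N (b : R) : cIm (Sp N (Complex 0 b : C)) = series (sin_coeff b) N.
Proof.
rewrite /Sp cIm_sum /series /=; apply: eq_bigr => j _.
rewrite cfC cIm_rM (ib_pow b j).2 /cf /sin_coeff /=; exact: mulrC.
Qed.

Lemma sgn_bound (c : bool) k l (x : R) :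
  `|c%:R * (-1) ^+ k * x ^+ l| <= `|x| ^+ l.
Proof.
rewrite !normrM normrX normrN normr1 expr1n mulr1 normrX.
by case: c; rewrite ?normr1 ?normr0 ?mul1r ?mul0r // exprn_ge0.
Qed.

Definition DR N (x y : R) :=
  \sum_(0 <= j < N) \sum_(N - j <= l < N) cf j * cf l * (x ^+ j * y ^+ l).

Lemma DR_cvg (x y : R) : (fun N => DR N x y) @ \oo --> 0.
Proof.
have -> : (fun N => DR N x y) = (fun N => Sp N x * Sp N y - Sp N (x + y)).
  by apply/funext => N; rewrite Sp_cauchy.
have -> : (0 : R) = expR x * expR y - expR (x + y) by rewrite expRD subrr.
apply: cvgB; last exact: Sp_exp_cvg.
exact: cvgM (Sp_exp_cvg x) (Sp_exp_cvg y).
Qed.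

Lemma Sp_split N (a b : R) :
  Sp N (Complex a b : C) = rC (Sp N a) * Sp N (Complex 0 b : C) -
    \sum_(0 <= j < N) \sum_(N - j <= l < N)
       cf j * cf l * (rC a ^+ j * (Complex 0 b : C) ^+ l).
Proof.
have -> : (Complex a b : C) = rC a + Complex 0 b.
  by change (Complex a b = Complex (a + 0) (0 + b) :> C); rewrite addr0 add0r.
rewrite -Sp_cauchy -Sp_rC.
have e : forall (V : zmodType) (x y : V), x = y - (y - x).
  by move=> V x y; rewrite opprB addrC subrK.
exact: e.
Qed.


Lemma cReB (x y : C) : cRe (x - y) = cRe x - cRe y.
Proof. destruct x as [a b]; destruct y as [c d]; reflexivity. Qed.
Lemma cImB (x y : C) : cIm (x - y) = cIm x - cIm y.
Proof. destruct x as [a b]; destruct y as [c d]; reflexivity. Qed.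

Lemma cf_ge0 j : 0 <= (cf j : R).
Proof. by rewrite /cf invr_ge0 ler0n. Qed.

Lemma term_rC j l (a : R) (w : C) :
  cf j * cf l * (rC a ^+ j * w) = rC (cf j * cf l * a ^+ j) * w.
Proof. by rewrite !cfC -rmorphXn mulrA -!rmorphM. Qed.

Lemma bound_aux (c1 c2 A Y B : R) : 0 <= c1 -> 0 <= c2 -> `|Y| <= B ->
  `|c1 * c2 * A * Y| <= c1 * c2 * (`|A| * B).
Proof.
move=> h1 h2 hY; rewrite !normrM (ger0_norm h1) (ger0_norm h2) -!mulrA.
apply: ler_wpM2l => //; apply: ler_wpM2l => //; apply: ler_wpM2l => //.
Qed.

Lemma DC_bound N (a b : R) :
  `|cRe (\sum_(0 <= j < N) \sum_(N - j <= l < N)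
       cf j * cf l * (rC a ^+ j * (Complex 0 b : C) ^+ l))| <= DR N `|a| `|b| /\
  `|cIm (\sum_(0 <= j < N) \sum_(N - j <= l < N)
       cf j * cf l * (rC a ^+ j * (Complex 0 b : C) ^+ l))| <= DR N `|a| `|b|.
Proof.
split.
- rewrite cRe_sum; apply: le_trans (ler_norm_sum _ _ _) _.
  apply: ler_sum => j _; rewrite cRe_sum; apply: le_trans (ler_norm_sum _ _ _) _.
  apply: ler_sum => l _; rewrite term_rC cRe_rM (ib_pow b l).1.
  rewrite -normrX; apply: bound_aux; [exact: cf_ge0 | exact: cf_ge0 | exact: sgn_bound].
- rewrite cIm_sum; apply: le_trans (ler_norm_sum _ _ _) _.
  apply: ler_sum => j _; rewrite cIm_sum; apply: le_trans (ler_norm_sum _ _ _) _.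
  apply: ler_sum => l _; rewrite term_rC cIm_rM (ib_pow b l).2.
  rewrite -normrX; apply: bound_aux; [exact: cf_ge0 | exact: cf_ge0 | exact: sgn_bound].
Qed.

Lemma squeeze0 (f : nat -> R) (g : nat -> R) :
  (forall N, `|f N| <= g N) -> g @ \oo --> 0 -> f @ \oo --> 0.
Proof.
move=> hb hg.
apply: (@squeeze_cvgr _ _ _ _ (fun N => - g N) g).
- by near=> N; rewrite -ler_norml.
- by rewrite -oppr0; apply: cvgN.
- exact: hg.
Unshelve. all: by end_near.
Qed.

Lemma Sp_cvg (a b : R) :
  (fun N => cRe (Sp N (Complex a b : C))) @ \oo --> expR a * cos b /\
  (fun N => cIm (Sp N (Complex a b : C))) @ \oo --> expR a * sin b.
Proof.
split.
- have -> : (fun N => cRe (Sp N (Complex a b : C))) =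
     (fun N => Sp N a * series (cos_coeff b) N -
        cRe (\sum_(0 <= j < N) \sum_(N - j <= l < N)
          cf j * cf l * (rC a ^+ j * (Complex 0 b : C) ^+ l))).
    by apply/funext => N; rewrite Sp_split cReB cRe_rM Sp_ib_Re.
  rewrite -[X in _ --> X]subr0; apply: cvgB.
    exact: cvgM (Sp_exp_cvg a) (cos_cvg b).
  apply: squeeze0; last exact: (DR_cvg `|a| `|b|).
  by move=> N; exact: (DC_bound N a b).1.
- have -> : (fun N => cIm (Sp N (Complex a b : C))) =
     (fun N => Sp N a * series (sin_coeff b) N -
        cIm (\sum_(0 <= j < N) \sum_(N - j <= l < N)
          cf j * cf l * (rC a ^+ j * (Complex 0 b : C) ^+ l))).
    by apply/funext => N; rewrite Sp_split cImB cIm_rM Sp_ib_Im.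
  rewrite -[X in _ --> X]subr0; apply: cvgB.
    exact: cvgM (Sp_exp_cvg a) (sin_cvg b).
  apply: squeeze0; last exact: (DR_cvg `|a| `|b|).
  by move=> N; exact: (DC_bound N a b).2.
Qed.

End Cx.


Section Alg.
Variable R : realType.
Variable n : nat.
Hypothesis n0 : (0 < n)%N.
Local Notation C := R[i].
Local Notation cRe := (@complex.Re R).
Local Notation cIm := (@complex.Im R).
Local Notation rC := (real_complex R).

Definition th (k p : nat) : R := 2 * pi * k%:R * p%:R / n%:R.
Definition ee (k p : nat) : C := Complex (cos (th k p)) (sin (th k p)).

Lemma n_neq0 : (n%:R : R) != 0.
Proof. by rewrite pnatr_eq0 -lt0n. Qed.

Lemma thD k p q : th k (p + q) = th k p + th k q.
Proof. by rewrite /th natrD !mulrDr !mulrDl. Qed.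

Lemma th_sym k p : th k p = th p k.
Proof. by rewrite /th [_ * _ * k%:R * _]mulrAC. Qed.

Lemma th0 k : th k 0 = 0.
Proof. by rewrite /th mulr0 mul0r. Qed.

Lemma thnm k m : th k (n * m) = (pi *+ 2) *+ (k * m).
Proof.
rewrite /th natrM [n%:R * _]mulrC mulrA mulfK ?n_neq0 //.
by rewrite -mulrnA -[RHS]mulr_natr !natrM; ring.
Qed.

Lemma cos_per (x : R) m : cos (x + (pi *+ 2) *+ m) = cos x.
Proof.
elim: m => [|m IH]; first by rewrite mulr0n addr0.
by rewrite mulrSr addrA cosD2pi.
Qed.
Lemma sin_per (x : R) m : sin (x + (pi *+ 2) *+ m) = sin x.
Proof.
elim: m => [|m IH]; first by rewrite mulr0n addr0.
by rewrite mulrSr addrA sinD2pi.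
Qed.

Lemma ee_mod k p : ee k (p %% n) = ee k p.
Proof.
have e : th k p = th k (p %% n) + (pi *+ 2) *+ (k * (p %/ n)).
  by rewrite {1}(divn_eq p n) addnC thD mulnC thnm.
by rewrite /ee e cos_per sin_per.
Qed.

Lemma ee_add k p q : ee k (p + q) = ee k p * ee k q.
Proof.
rewrite /ee thD cosD sinD.
apply/eqP; rewrite eq_complex /=; apply/andP; split; apply/eqP; ring.
Qed.

Lemma ee0 k : ee k 0 = 1.
Proof. by rewrite /ee th0 cos0 sin0. Qed.


Definition chi (k : nat) (w : 'rV[R]_n) : C := \sum_(p < n) rC (w 0 p) * ee k p.

Lemma chi_mul k (x y : 'rV[R]_n) : chi k (pcmul x y) = chi k x * chi k y.
Proof.
rewrite /chi /pcmul.
under eq_bigr => m _ do rewrite mxE rmorph_sum mulr_suml.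
rewrite exchange_big /=.
have -> : \sum_(j < n) \sum_(m < n)
      rC (\sum_(l < n | ((j + l) %% n)%N == m) x 0 j * y 0 l) * ee k m =
    \sum_(j < n) \sum_(l < n) rC (x 0 j * y 0 l) * ee k ((j + l) %% n).
  apply: eq_bigr => j _.
  under eq_bigr => m _ do rewrite rmorph_sum mulr_suml.
  rewrite (exchange_big_dep xpredT) //=.
  apply: eq_bigr => l _.
  rewrite (big_pred1 (Ordinal (ltn_pmod (j + l) n0))) //.
rewrite mulr_suml; apply: eq_bigr => j _.
rewrite mulr_sumr; apply: eq_bigr => l _.
rewrite ee_mod ee_add rmorphM.
by rewrite mulrACA.
Qed.


Lemma chi_one k : chi k (pcone R n) = 1.
Proof.
rewrite /chi (bigD1 (Ordinal n0)) //= big1 ?addr0.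
  by rewrite /pcone /pc_h mxE mod0n eqxx /= rmorph1 mul1r ee0.
move=> i /= ne; rewrite /pcone /pc_h mxE mod0n.
have -> : ((i : nat) == 0%N) = false.
  by apply/negbTE; apply: contra ne => /eqP h; apply/eqP/val_inj.
by rewrite rmorph0 mul0r.
Qed.

Lemma chiD k (x y : 'rV[R]_n) : chi k (x + y) = chi k x + chi k y.
Proof.
rewrite /chi -big_split /=; apply: eq_bigr => p _.
by rewrite mxE rmorphD mulrDl.
Qed.

Lemma chi0 k : chi k 0 = 0.
Proof. by rewrite /chi big1 // => p _; rewrite mxE rmorph0 mul0r. Qed.

Lemma chiZ k (c : R) (x : 'rV[R]_n) : chi k (c *: x) = rC c * chi k x.
Proof.
rewrite /chi mulr_sumr; apply: eq_bigr => p _.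
by rewrite mxE rmorphM mulrA.
Qed.

Lemma chi_sum k I (r : seq I) (F : I -> 'rV[R]_n) :
  chi k (\sum_(i <- r) F i) = \sum_(i <- r) chi k (F i).
Proof. exact: (big_morph _ (chiD k) (chi0 k)). Qed.

Lemma chi_pow k (u : 'rV[R]_n) j : chi k (pcpow u j) = chi k u ^+ j.
Proof.
elim: j => [|j IH]; first by rewrite expr0 /pcpow /= chi_one.
by rewrite /pcpow iterS -/(pcpow u j) chi_mul IH exprS.
Qed.

Lemma chi_exp k (u : 'rV[R]_n) N : chi k (pcexp_partial u N) = Sp N (chi k u).
Proof.
rewrite /pcexp_partial chi_sum /Sp big_mkord; apply: eq_bigr => j _.
by rewrite chiZ chi_pow cfC.
Qed.

Lemma chi_Re k (u : 'rV[R]_n) : cRe (chi k u) = v_k k u.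
Proof.
rewrite /chi cRe_sum /v_k; apply: eq_bigr => p _.
by rewrite cRe_rM.
Qed.

Lemma chi_Im k (u : 'rV[R]_n) : cIm (chi k u) = vt_k k u.
Proof.
rewrite /chi cIm_sum /vt_k; apply: eq_bigr => p _.
by rewrite cIm_rM.
Qed.


Lemma mod_d_eq0 (q p : nat) : (q < n)%N -> (p < n)%N ->
  ((q + (n - p)) %% n == 0)%N = (q == p).
Proof.
move=> hq hp; case: (ltngtP q p) => h.
- rewrite modn_small; [apply/eqP/eqP; lia | lia].
- have -> : (q + (n - p) = (q - p) + n)%N by lia.
  rewrite modnDr modn_small; [apply/eqP/eqP; lia | lia].
- by subst q; rewrite subnKC ?modnn ?eqxx // ltnW.
Qed.

Lemma cos_ne1 r : (0 < r)%N -> (r < n)%N -> cos (th 1 r) != 1.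
Proof.
move=> r0 rn.
pose y : R := pi * (r%:R / n%:R).
have ey : th 1 r = y *+ 2.
  by rewrite /th /y mulr1 -mulr_natr; ring.
have npos : 0 < (n%:R : R) by rewrite ltr0n.
have y0 : 0 < y.
  by rewrite /y mulr_gt0 ?pi_gt0 // divr_gt0 // ltr0n.
have ypi : y < pi.
  rewrite /y -[X in _ < X]mulr1 ltr_pM2l ?pi_gt0 //.
  by rewrite ltr_pdivrMr // mul1r ltr_nat.
rewrite ey cos_mulr2n; apply/negP => /eqP h.
have h2 : cos y ^+ 2 = 1 by move: h; rewrite -mulr_natr; lra.
have : `|cos y| = 1.
  apply/eqP; rewrite -(@eqrXn2 _ 2) ?normr_ge0 // ?ler01 //.
  by rewrite real_normK ?num_real // h2 expr1n.
move/cos1sin0 => s0.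
by have := @sin_gt0_pi R y; rewrite y0 ypi s0 ltxx => /(_ isT).
Qed.

Lemma ee_sym k p : ee k p = ee p k.
Proof. by rewrite /ee th_sym. Qed.

Lemma ee_pow d k : ee d k = ee d 1 ^+ k.
Proof.
elim: k => [|k IH]; first by rewrite ee0 expr0.
by rewrite exprSr -IH -ee_add addn1.
Qed.

Lemma sum_ee0 d : (d %% n != 0)%N -> \sum_(k < n) ee k d = 0.
Proof.
move=> hd.
under eq_bigr => k _ do rewrite ee_sym ee_pow.
have w1 : ee d 1 != 1.
  rewrite ee_sym -ee_mod; apply/negP => /eqP h.
  have := congr1 (@complex.Re R) h; rewrite /= => hc.
  have := @cos_ne1 (d %% n)%N; rewrite lt0n hd ltn_pmod // hc eqxx.
  by move=> /(_ isT isT).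
have wn : ee d 1 ^+ n = 1 by rewrite -ee_pow -ee_mod modnn ee0.
have := subrX1 (ee d 1) n; rewrite wn subrr => /esym /eqP.
by rewrite mulf_eq0 subr_eq0 (negbTE w1) /= => /eqP.
Qed.

Lemma sum_cos0 d : (d %% n != 0)%N -> \sum_(k < n) cos (th k d) = 0.
Proof.
move=> hd; have := congr1 (@complex.Re R) (@sum_ee0 d hd).
by rewrite cRe_sum.
Qed.


Lemma cos_perB (x : R) m : cos (x - (pi *+ 2) *+ m) = cos x.
Proof. by rewrite -[in RHS](subrK ((pi *+ 2) *+ m) x) cos_per. Qed.

Lemma ortho (q p : nat) : (q < n)%N -> (p < n)%N ->
  \sum_(k < n) (cos (th k q) * cos (th k p) + sin (th k q) * sin (th k p))
  = (q == p)%:R * n%:R.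
Proof.
move=> hq hp.
under eq_bigr => k _ do rewrite -cosB.
case: (eqVneq q p) => [->|qp].
  under eq_bigr => k _ do rewrite subrr cos0.
  by rewrite sumr_const card_ord mul1r.
have e : forall k, th k q - th k p = th k (q + (n - p)) - (pi *+ 2) *+ k.
  move=> k.
  have hn : th k (n - p) + th k p = (pi *+ 2) *+ k.
    by rewrite -thD subnK ?(ltnW hp) // -[X in th k X]muln1 thnm muln1.
  rewrite thD -hn; ring.
under eq_bigr => k _ do rewrite e cos_perB.
rewrite sum_cos0; last by rewrite mod_d_eq0.
by rewrite mul0r.
Qed.

Lemma inv_chi (w : 'rV[R]_n) (p : 'I_n) :
  w 0 p = n%:R^-1 * \sum_(k < n)
     (cRe (chi k w) * cos (th k p) + cIm (chi k w) * sin (th k p)).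
Proof.
have -> : \sum_(k < n)
     (cRe (chi k w) * cos (th k p) + cIm (chi k w) * sin (th k p)) =
   \sum_(q < n) w 0 q * \sum_(k < n)
     (cos (th k q) * cos (th k p) + sin (th k q) * sin (th k p)).
  under eq_bigr => k _ do rewrite /chi cRe_sum cIm_sum !mulr_suml -big_split.
  under [RHS]eq_bigr => q _ do rewrite mulr_sumr.
  rewrite [RHS]exchange_big /=; apply: eq_bigr => k _; apply: eq_bigr => q _.
  ring.
under eq_bigr => q _ do rewrite ortho //.
rewrite (bigD1 p) //= big1 ?addr0.
  by rewrite eqxx mul1r mulrC mulfK // n_neq0.
move=> q qp; have -> : ((q : nat) == p) = false.
  by apply/negbTE; apply: contra qp => /eqP h; apply/eqP/val_inj.
by rewrite mul0r mulr0.
Qed.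

End Alg.
Arguments th {R} n k p.
Arguments ee {R} n k p.
Arguments chi {R} n k w.
Arguments inv_chi {R n} n0 w p.
Arguments chi_exp {R n} n0 k u N.
Arguments chi_Re {R n} k u.
Arguments chi_Im {R n} k u.


Section Fin.
Variable R : realType.
Local Notation C := R[i].
Local Notation cRe := (@complex.Re R).
Local Notation cIm := (@complex.Im R).

Lemma cvg_sum_ord (V : normedModType R) (m : nat) (f : 'I_m -> nat -> V)
  (l : 'I_m -> V) : (forall i, f i @ \oo --> l i) ->
  (fun N => \sum_(i < m) f i N) @ \oo --> \sum_(i < m) l i.
Proof.
elim: m f l => [|m IH] f l h.
  under eq_fun do rewrite big_ord0.
  by rewrite big_ord0; apply: cvg_cst.
under eq_fun do rewrite big_ord_recr.
rewrite big_ord_recr; apply: cvgD; first exact: IH.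
exact: h.
Qed.

Variable n : nat.
Hypothesis n0 : (0 < n)%N.
Variable u : 'rV[R]_n.

Definition Lc (p : 'I_n) : R := n%:R^-1 * \sum_(k < n)
  (expR (v_k k u) * cos (vt_k k u) * cos (th n k p) +
   expR (v_k k u) * sin (vt_k k u) * sin (th n k p)).

Lemma coord_cvg (p : 'I_n) :
  (fun N => pcexp_partial u N 0 p) @ \oo --> Lc p.
Proof.
have -> : (fun N => pcexp_partial u N 0 p) = (fun N => n%:R^-1 * \sum_(k < n)
   (cRe (Sp N (chi n k u)) * cos (th n k p) + cIm (Sp N (chi n k u)) * sin (th n k p))).
  apply/funext => N; rewrite (inv_chi n0 (pcexp_partial u N) p).
  by congr (_ * _); apply: eq_bigr => k _; rewrite (chi_exp n0).
apply: cvgM; first exact: cvg_cst.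
apply: cvg_sum_ord => k.
have ec : chi n k u = Complex (v_k k u) (vt_k k u).
  rewrite -chi_Re -chi_Im; by case: (chi n k u).
rewrite ec; have [hr hi] := @Sp_cvg R (v_k k u) (vt_k k u).
apply: cvgD; apply: cvgM => //; exact: cvg_cst.
Qed.

Lemma vec_cvg : pcexp_partial u @ \oo --> \sum_(p < n) Lc p *: delta_mx 0 p.
Proof.
have -> : pcexp_partial u = (fun N => \sum_(p < n) pcexp_partial u N 0 p *: delta_mx 0 p).
  by apply/funext => N; rewrite -row_sum_delta.
apply: cvg_sum_ord => p.
apply: cvgZ; first exact: coord_cvg.
exact: cvg_cst.
Qed.

End Fin.
Arguments Lc {R n} u p.
Arguments vec_cvg {R n} n0 u.


Section SymSum.
Variable K : comRingType.

Lemma rev_sum (n : nat) (g : nat -> K) j : (j <= n)%N ->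
  \sum_(n - j <= k < n) g k = \sum_(1 <= k < j.+1) g (n - k)%N.
Proof.
elim: j => [|j IH] hj.
  by rewrite subn0 !big_geq.
have hj' : (j <= n)%N by lia.
have lt : (n - j.+1 < n)%N by lia.
rewrite big_ltn // subnSK // IH // [RHS]big_nat_recr //=.
by rewrite addrC.
Qed.

Lemma sum_sym_odd (g : nat -> K) m :
  (forall k, (0 < k)%N -> (k < m.*2.+1)%N -> g (m.*2.+1 - k)%N = g k) ->
  \sum_(1 <= k < m.*2.+1) g k = 2 * \sum_(1 <= k < m.+1) g k.
Proof.
move=> hs.
rewrite (@big_cat_nat _ _ _ m.+1) //=; last by lia.
have -> : m.+1 = (m.*2.+1 - m)%N by lia.
rewrite rev_sum; last by lia.
have -> : (m.*2.+1 - m = m.+1)%N by lia.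
rewrite [X in _ + X = _](@eq_big_nat _ _ _ _ _ _ g); last first.
  move=> k /andP[k1 km]; apply: hs => //; lia.
by rewrite mulr2n mulrDl mul1r.
Qed.

Lemma sum_sym_even (g : nat -> K) m : (0 < m)%N ->
  (forall k, (0 < k)%N -> (k < m.*2)%N -> g (m.*2 - k)%N = g k) ->
  \sum_(1 <= k < m.*2) g k = g m + 2 * \sum_(1 <= k < m) g k.
Proof.
move=> m0 hs.
rewrite (@big_cat_nat _ _ _ m) //=; last by lia.
rewrite (@big_ltn _ _ _ m (m.*2)); last by lia.
have -> : m.+1 = (m.*2 - (m - 1))%N by lia.
rewrite rev_sum; last by lia.
have -> : ((m - 1).+1 = m)%N by lia.
rewrite [X in _ + (_ + X) = _](@eq_big_nat _ _ _ _ _ _ g); last first.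
  move=> k /andP[k1 km]; apply: hs => //; lia.
rewrite mulr2n mulrDl mul1r; ring.
Qed.

End SymSum.


Section Coord.
Variable R : realType.
Variable n : nat.
Hypothesis n0 : (0 < n)%N.
Variable u : 'rV[R]_n.

Lemma v_kE k : v_k k u = \sum_(q < n) u 0 q * cos (th n k q).
Proof. reflexivity. Qed.
Lemma vt_kE k : vt_k k u = \sum_(q < n) u 0 q * sin (th n k q).
Proof. reflexivity. Qed.

Definition g (p : 'I_n) (k : nat) : R := expR (v_k k u) *
  (cos (vt_k k u) * cos (th n k p) + sin (vt_k k u) * sin (th n k p)).

Lemma Lc_g p : Lc u p = n%:R^-1 * \sum_(k < n) g p k.
Proof. rewrite /Lc /g; congr (_ * _); apply: eq_bigr => k _; ring. Qed.

Lemma pc_h_coord (f : nat -> R) (p : 'I_n) :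
  (\sum_(q < n) f q *: pc_h R n q) 0 p = f p.
Proof.
rewrite summxE (bigD1 p) //= big1 ?addr0.
  by rewrite !mxE modn_small // eqxx mulr1.
move=> q qp; rewrite !mxE modn_small //.
have -> : ((p : nat) == q) = false.
  by apply/negbTE; apply: contra qp => /eqP h; apply/eqP/val_inj.
by rewrite mulr0.
Qed.

Lemma ep_coord p : e_plus R n 0 p = n%:R^-1.
Proof.
rewrite /e_plus mxE.
under eq_bigr => q _ do rewrite -[pc_h R n q]scale1r.
by rewrite (pc_h_coord (fun _ => 1)) mulr1.
Qed.

Lemma em_coord (p : 'I_n) : e_minus R n 0 p = n%:R^-1 * (-1) ^+ p.
Proof. by rewrite /e_minus mxE (pc_h_coord (fun q => (-1) ^+ q)). Qed.

Lemma ek_coord k (p : 'I_n) : e_k R n k 0 p = 2 / n%:R * cos (th n k p).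
Proof. by rewrite /e_k mxE (pc_h_coord (fun q => cos (th n k q))). Qed.

Lemma etk_coord k (p : 'I_n) : et_k R n k 0 p = 2 / n%:R * sin (th n k p).
Proof. by rewrite /et_k mxE (pc_h_coord (fun q => sin (th n k q))). Qed.

Lemma th_refl k q : (k <= n)%N -> th n (n - k) q = (pi *+ 2) *+ q - th (R:=R) n k q.
Proof.
move=> kn.
have h : th n (n - k) q + th n k q = (pi *+ 2) *+ q :> R.
  rewrite [th n (n - k)%N q]th_sym [th n k q]th_sym -thD subnK //.
  by rewrite -[X in th n q X]muln1 (@thnm R n n0) muln1.
by rewrite -h addrK.
Qed.

Lemma cos_refl k q : (k <= n)%N -> cos (th n (n - k) q) = cos (th (R:=R) n k q).
Proof. by move=> kn; rewrite th_refl // addrC cos_per cosN. Qed.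
Lemma sin_refl k q : (k <= n)%N -> sin (th n (n - k) q) = - sin (th (R:=R) n k q).
Proof. by move=> kn; rewrite th_refl // addrC sin_per sinN. Qed.

Lemma v_refl k : (k <= n)%N -> v_k (n - k) u = v_k k u.
Proof. by move=> kn; rewrite !v_kE; apply: eq_bigr => q _; rewrite cos_refl. Qed.
Lemma vt_refl k : (k <= n)%N -> vt_k (n - k) u = - vt_k k u.
Proof.
by move=> kn; rewrite !vt_kE -sumrN; apply: eq_bigr => q _; rewrite sin_refl // mulrN.
Qed.

Lemma g_refl p k : (k <= n)%N -> g p (n - k) = g p k.
Proof.
move=> kn; rewrite /g v_refl // vt_refl // cos_refl // sin_refl // cosN sinN; ring.
Qed.

Lemma g0 p : g p 0 = expR (v_plus u).
Proof.
rewrite /g.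
have t0 : forall q, th n 0 q = 0 :> R by move=> q; rewrite th_sym th0.
have -> : v_k 0 u = v_plus u.
  by rewrite v_kE /v_plus; apply: eq_bigr => q _; rewrite t0 cos0 mulr1.
have -> : vt_k 0 u = 0.
  by rewrite vt_kE big1 // => q _; rewrite t0 sin0 mulr0.
by rewrite t0 cos0 sin0; ring.
Qed.

Lemma cos_pin q : cos (pi *+ q) = (-1) ^+ q :> R.
Proof.
elim: q => [|q IH]; first by rewrite mulr0n cos0 expr0.
by rewrite mulrSr cosDpi IH exprS mulN1r.
Qed.
Lemma sin_pin q : sin (pi *+ q) = 0 :> R.
Proof.
elim: q => [|q IH]; first by rewrite mulr0n sin0.
by rewrite mulrSr sinDpi IH oppr0.
Qed.

Lemma th_half m q : n = m.*2 -> th n m q = pi *+ q :> R.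
Proof.
move=> hn.
have hm : (m%:R : R) != 0 by rewrite pnatr_eq0; apply/eqP => m0; move: n0; rewrite hn m0.
rewrite /th hn -muln2 natrM -[RHS]mulr_natr.
apply: (@mulIf _ (m%:R * 2%:R)); first by rewrite mulf_neq0 // pnatr_eq0.
rewrite divfK; first ring.
by rewrite mulf_neq0 // pnatr_eq0.
Qed.

Lemma gm m (p : 'I_n) : n = m.*2 -> g p m = expR (v_minus u) * (-1) ^+ p.
Proof.
move=> hn; rewrite /g.
have -> : v_k m u = v_minus u.
  by rewrite v_kE /v_minus; apply: eq_bigr => q _; rewrite th_half // cos_pin mulrC.
have -> : vt_k m u = 0.
  by rewrite vt_kE big1 // => q _; rewrite th_half // sin_pin mulr0.
by rewrite th_half // cos_pin sin_pin cos0 sin0; ring.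
Qed.

End Coord.
Arguments g {R n} u p k.


Lemma addmx_coord (R : realType) n (A B : 'rV[R]_n) p : (A + B) 0 p = A 0 p + B 0 p.
Proof. exact: mxE. Qed.
Lemma scalemx_coord (R : realType) n (c : R) (A : 'rV[R]_n) p : (c *: A) 0 p = c * A 0 p.
Proof. exact: mxE. Qed.

Lemma T_even (R : realType) (n : nat) (hn : (2 <= n)%N) (u : 'rV[R]_n) :
  ~~ odd n ->
  ((expR (v_plus u) *: e_plus R n + expR (v_minus u) *: e_minus R n
       + \sum_(1 <= k < n./2)
           expR (v_k k u) *: (cos (vt_k k u) *: e_k R n k
                              + sin (vt_k k u) *: et_k R n k)) : 'rV[R]_n)
  = \sum_(p < n) Lc u p *: delta_mx 0 p.
Proof.
move=> he.
have n0 : (0 < n)%N by apply: leq_trans hn.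
have [m hnm] : exists m, n = m.*2.
  by exists n./2; rewrite -{1}(odd_double_half n) (negbTE he) add0n.
have m0 : (0 < m)%N by move: hn; rewrite hnm; lia.
have e2 : n./2 = m by rewrite hnm doubleK.
rewrite e2 [LHS]row_sum_delta; apply: eq_bigr => p _; congr (_ *: _).
rewrite (@addmx_coord R n (_ + _)) (@addmx_coord R n (_ *: e_plus R n)).
rewrite (@scalemx_coord R n _ (e_plus R n)) (@scalemx_coord R n _ (e_minus R n)) ep_coord em_coord summxE.
under eq_big_nat => k _ do rewrite scalemx_coord addmx_coord (@scalemx_coord R n _ (e_k R n k)) (@scalemx_coord R n _ (et_k R n k)) ek_coord etk_coord.
rewrite Lc_g.
rewrite -(big_mkord xpredT (g u p)) (big_ltn n0) g0.
have hs := @sum_sym_even R (g u p) m m0.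
rewrite -hnm in hs; rewrite hs; last first.
  by move=> k k0 kn; rewrite (@g_refl R n n0) // ltnW.
rewrite (@gm R n n0 u m p hnm).
have -> : \sum_(1 <= k < m) expR (v_k k u) * (cos (vt_k k u) * (2 / n%:R * cos (th n k p))
    + sin (vt_k k u) * (2 / n%:R * sin (th n k p))) =
   n%:R^-1 * (2 * \sum_(1 <= k < m) g u p k).
  rewrite mulrA mulr_sumr; apply: eq_bigr => k _; rewrite /g; ring.
ring.
Qed.

Lemma T_odd (R : realType) (n : nat) (hn : (2 <= n)%N) (u : 'rV[R]_n) :
  odd n ->
  ((expR (v_plus u) *: e_plus R n
       + \sum_(1 <= k < (n.-1)./2.+1)
           expR (v_k k u) *: (cos (vt_k k u) *: e_k R n k
                              + sin (vt_k k u) *: et_k R n k)) : 'rV[R]_n)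
  = \sum_(p < n) Lc u p *: delta_mx 0 p.
Proof.
move=> ho.
have n0 : (0 < n)%N by apply: leq_trans hn.
have [m hnm] : exists m, n = m.*2.+1.
  by exists n./2; rewrite -{1}(odd_double_half n) ho add1n.
have e2 : (n.-1)./2.+1 = m.+1 by rewrite hnm /= doubleK.
rewrite e2 [LHS]row_sum_delta; apply: eq_bigr => p _; congr (_ *: _).
rewrite (@addmx_coord R n (_ *: e_plus R n)).
rewrite (@scalemx_coord R n _ (e_plus R n)) ep_coord summxE.
under eq_big_nat => k _ do rewrite scalemx_coord addmx_coord (@scalemx_coord R n _ (e_k R n k)) (@scalemx_coord R n _ (et_k R n k)) ek_coord etk_coord.
rewrite Lc_g.
rewrite -(big_mkord xpredT (g u p)) (big_ltn n0) g0.
have hs := @sum_sym_odd R (g u p) m.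
rewrite -hnm in hs; rewrite hs; last first.
  by move=> k k0 kn; rewrite (@g_refl R n n0) // ltnW.
have -> : \sum_(1 <= k < m.+1) expR (v_k k u) * (cos (vt_k k u) * (2 / n%:R * cos (th n k p))
    + sin (vt_k k u) * (2 / n%:R * sin (th n k p))) =
   n%:R^-1 * (2 * \sum_(1 <= k < m.+1) g u p k).
  rewrite mulrA mulr_sumr; apply: eq_bigr => k _; rewrite /g; ring.
ring.
Qed.

Theorem mainTheorem12 (R : realType) (n : nat) (hn : (2 <= n)%N)
    (u : 'rV[R]_n) :
  (~~ odd n ->
    pcexp_partial u @ \oo -->
      ((expR (v_plus u) *: e_plus R n + expR (v_minus u) *: e_minus R n
       + \sum_(1 <= k < n./2)
           expR (v_k k u) *: (cos (vt_k k u) *: e_k R n k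
                              + sin (vt_k k u) *: et_k R n k)) : 'rV[R]_n)) /\
  (odd n ->
    pcexp_partial u @ \oo -->
      ((expR (v_plus u) *: e_plus R n
       + \sum_(1 <= k < (n.-1)./2.+1)
           expR (v_k k u) *: (cos (vt_k k u) *: e_k R n k
                              + sin (vt_k k u) *: et_k R n k)) : 'rV[R]_n)).
Proof.
have n0 : (0 < n)%N by apply: leq_trans hn.
split => h.
- rewrite (@T_even R n hn u h); exact: vec_cvg n0 u.
- rewrite (@T_odd R n hn u h); exact: vec_cvg n0 u.
Qed.
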